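(* Let $\mathcal{A}$ be a complex Banach algebra with identity, $\lambda$ a nonzero complex number, and $M = \begin{pmatrix} A & B \\ C & D \end{pmatrix} \in M_2(\mathcal{A})$ with $A, D \in \mathcal{A}^d$. If $$AB = \lambda A^\pi B D,\quad DC = \lambda D^\pi C A,\quad BC = 0,$$ then $M \in M_2(\mathcal{A})^d$ and $$M^d = \begin{pmatrix} A^d & 0 \\ 0 & D^d \end{pmatrix} + \sum_{n=0}^{\infty} M^n \begin{pmatrix} 0 & B(D^d)^{n+2} \\ C(A^d)^{n+2} & 0 \end{pmatrix}.$$
   Context: $M_2(\mathcal{A})$ is the Banach algebra of $2\times 2$ matrices over $\mathcal{A}$. An element $x$ of a Banach algebra has a generalized Drazin (g-Drazin) inverse $x^d$ if $x^d$ commutes with $x$, $x^d = x^dxx^d$ and $x - x^2x^d$ is quasinilpotent (i.e. $\lim\|y^n\|^{1/n}=0$ for $y=x-x^2x^d$); $\mathcal{A}^d$ (resp. $M_2(\mathcal{A})^d$) denotes the set of g-Drazin invertible elements. The spectral idempotent is $x^\pi = 1 - xx^d$. $M^0$ is the identity matrix. *)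

(* Defs.v *)
From Stdlib Require Import Reals.
Open Scope R_scope.

Definition Cx : Type := (R * R)%type.
Definition C0 : Cx := (0, 0).
Definition C1 : Cx := (1, 0).
Definition Cadd (a b : Cx) : Cx := (fst a + fst b, snd a + snd b).
Definition Cmul (a b : Cx) : Cx :=
  (fst a * fst b - snd a * snd b, fst a * snd b + snd a * fst b).
Definition Cmod (a : Cx) : R := sqrt (fst a * fst a + snd a * snd a).

Record CBanachAlgebra := {
  car :> Type;
  zero : car;
  one : car;
  add : car -> car -> car;
  opp : car -> car;
  mul : car -> car -> car;
  scal : Cx -> car -> car;
  norm : car -> R;
  add_assoc : forall x y z, add x (add y z) = add (add x y) z;
  add_comm : forall x y, add x y = add y x;
  add_0l : forall x, add zero x = x;
  add_oppl : forall x, add (opp x) x = zero;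
  mul_assoc : forall x y z, mul x (mul y z) = mul (mul x y) z;
  mul_1l : forall x, mul one x = x;
  mul_1r : forall x, mul x one = x;
  mul_addl : forall x y z, mul (add x y) z = add (mul x z) (mul y z);
  mul_addr : forall x y z, mul x (add y z) = add (mul x y) (mul x z);
  scal_addl : forall a b x, scal (Cadd a b) x = add (scal a x) (scal b x);
  scal_addr : forall a x y, scal a (add x y) = add (scal a x) (scal a y);
  scal_mul : forall a b x, scal (Cmul a b) x = scal a (scal b x);
  scal_1 : forall x, scal C1 x = x;
  scal_mull : forall a x y, mul (scal a x) y = scal a (mul x y);
  scal_mulr : forall a x y, mul x (scal a y) = scal a (mul x y);
  norm_eq0 : forall x, norm x = 0 -> x = zero;
  norm_triangle : forall x y, norm (add x y) <= norm x + norm y;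
  norm_scal : forall a x, norm (scal a x) = Cmod a * norm x;
  norm_mul : forall x y, norm (mul x y) <= norm x * norm y;
  complete : forall u : nat -> car,
    (forall eps, eps > 0 -> exists N, forall m n, (m >= N)%nat -> (n >= N)%nat ->
        norm (add (u m) (opp (u n))) < eps) ->
    exists l, forall eps, eps > 0 -> exists N, forall n, (n >= N)%nat ->
        norm (add (u n) (opp l)) < eps
}.

Arguments zero {_}. Arguments one {_}. Arguments add {_}. Arguments opp {_}.
Arguments mul {_}. Arguments scal {_}. Arguments norm {_}.

Section Generic.
Variable T : Type.
Variables (gzero gone : T) (gadd : T -> T -> T) (gopp : T -> T)
          (gmul : T -> T -> T) (gnorm : T -> R).

Fixpoint gpow (x : T) (n : nat) : T :=
  match n with O => gone | S k => gmul x (gpow x k) end.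

(* lim ||y^n||^{1/n} = 0, i.e. for all eps > 0, eventually ||y^n|| <= eps^n *)
Definition gquasinil (y : T) : Prop :=
  forall eps, eps > 0 -> exists N, forall n, (n >= N)%nat ->
    gnorm (gpow y n) <= eps ^ n.

Definition gis_gdrazin (x z : T) : Prop :=
  gmul z x = gmul x z /\ z = gmul (gmul z x) z /\
  gquasinil (gadd x (gopp (gmul (gmul x x) z))).

Fixpoint gpsum (f : nat -> T) (n : nat) : T :=
  match n with O => f O | S k => gadd (gpsum f k) (f (S k)) end.

Definition gseries_sum (f : nat -> T) (S : T) : Prop :=
  forall eps, eps > 0 -> exists N, forall n, (n >= N)%nat ->
    gnorm (gadd (gpsum f n) (gopp S)) < eps.
End Generic.
Arguments gpow {T}. Arguments gquasinil {T}. Arguments gis_gdrazin {T}.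
Arguments gpsum {T}. Arguments gseries_sum {T}.

Section Alg.
Variable A : CBanachAlgebra.
Definition apow (x : A) (n : nat) : A := gpow one mul x n.
Definition is_gdrazin (x z : A) : Prop := gis_gdrazin one add opp mul norm x z.
Definition sub (x y : A) : A := add x (opp y).
Definition spidem (x xd : A) : A := sub one (mul x xd).

Record M2 := mk2 { m11 : A; m12 : A; m21 : A; m22 : A }.
Definition M2zero : M2 := mk2 zero zero zero zero.
Definition M2one : M2 := mk2 one zero zero one.
Definition M2add (M N : M2) : M2 :=
  mk2 (add (m11 M) (m11 N)) (add (m12 M) (m12 N))
      (add (m21 M) (m21 N)) (add (m22 M) (m22 N)).
Definition M2opp (M : M2) : M2 :=
  mk2 (opp (m11 M)) (opp (m12 M)) (opp (m21 M)) (opp (m22 M)).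
Definition M2mul (M N : M2) : M2 :=
  mk2 (add (mul (m11 M) (m11 N)) (mul (m12 M) (m21 N)))
      (add (mul (m11 M) (m12 N)) (mul (m12 M) (m22 N)))
      (add (mul (m21 M) (m11 N)) (mul (m22 M) (m21 N)))
      (add (mul (m21 M) (m12 N)) (mul (m22 M) (m22 N))).
(* a Banach algebra norm on M_2(A) (all such norms are equivalent) *)
Definition M2norm (M : M2) : R :=
  norm (m11 M) + norm (m12 M) + norm (m21 M) + norm (m22 M).

Definition M2pow (M : M2) (n : nat) : M2 := gpow M2one M2mul M n.
Definition M2is_gdrazin (M Z : M2) : Prop :=
  gis_gdrazin M2one M2add M2opp M2mul M2norm M Z.
Definition M2series_sum (f : nat -> M2) (S : M2) : Prop :=
  gseries_sum M2add M2opp M2norm f S.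
End Alg.

Arguments mk2 {_}.

(* Main.v *)
Require Import Defs.
From Stdlib Require Import Reals.
From Stdlib Require Import Lra Psatz Lia.
Open Scope R_scope.

Lemma aA {X : CBanachAlgebra} (x y z : X) : add x (add y z) = add (add x y) z.
Proof. apply add_assoc. Qed.
Lemma aC {X : CBanachAlgebra} (x y : X) : add x y = add y x.
Proof. apply add_comm. Qed.
Lemma a0l {X : CBanachAlgebra} (x : X) : add zero x = x.
Proof. apply add_0l. Qed.
Lemma a0r {X : CBanachAlgebra} (x : X) : add x zero = x.
Proof. rewrite aC; apply add_0l. Qed.
Lemma aNl {X : CBanachAlgebra} (x : X) : add (opp x) x = zero.
Proof. apply add_oppl. Qed.
Lemma aNr {X : CBanachAlgebra} (x : X) : add x (opp x) = zero.
Proof. rewrite aC; apply add_oppl. Qed.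
Lemma mA {X : CBanachAlgebra} (x y z : X) : mul x (mul y z) = mul (mul x y) z.
Proof. apply mul_assoc. Qed.
Lemma m1l {X : CBanachAlgebra} (x : X) : mul one x = x.
Proof. apply mul_1l. Qed.
Lemma m1r {X : CBanachAlgebra} (x : X) : mul x one = x.
Proof. apply mul_1r. Qed.
Lemma mDl {X : CBanachAlgebra} (x y z : X) : mul (add x y) z = add (mul x z) (mul y z).
Proof. apply mul_addl. Qed.
Lemma mDr {X : CBanachAlgebra} (x y z : X) : mul x (add y z) = add (mul x y) (mul x z).
Proof. apply mul_addr. Qed.

Lemma a_cancel {X : CBanachAlgebra} (a b : X) : a = add a b -> b = zero.
Proof.
  intro H. assert (H2 : add (opp a) a = add (opp a) (add a b)) by (f_equal; exact H).
  rewrite aA, aNl, a0l in H2. symmetry; exact H2.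
Qed.
Lemma opp_uniq {X : CBanachAlgebra} (a b : X) : add a b = zero -> b = opp a.
Proof.
  intro H. assert (H2 : add (opp a) (add a b) = add (opp a) zero) by (f_equal; exact H).
  rewrite aA, aNl, a0l, a0r in H2. exact H2.
Qed.
Lemma m0l {X : CBanachAlgebra} (x : X) : mul zero x = zero.
Proof. apply (a_cancel (mul zero x)). rewrite <- mDl, a0l. reflexivity. Qed.
Lemma m0r {X : CBanachAlgebra} (x : X) : mul x zero = zero.
Proof. apply (a_cancel (mul x zero)). rewrite <- mDr, a0l. reflexivity. Qed.
Lemma mNr {X : CBanachAlgebra} (x y : X) : mul x (opp y) = opp (mul x y).
Proof. apply opp_uniq. rewrite <- mDr, aNr, m0r. reflexivity. Qed.
Lemma mNl {X : CBanachAlgebra} (x y : X) : mul (opp x) y = opp (mul x y).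
Proof. apply opp_uniq. rewrite <- mDl, aNr, m0l. reflexivity. Qed.
Lemma opp0 {X : CBanachAlgebra} : opp (@zero X) = zero.
Proof. symmetry. apply opp_uniq. apply a0l. Qed.

Lemma sD {X : CBanachAlgebra} a b (x : X) : scal (Cadd a b) x = add (scal a x) (scal b x).
Proof. apply scal_addl. Qed.
Lemma sDr {X : CBanachAlgebra} a (x y : X) : scal a (add x y) = add (scal a x) (scal a y).
Proof. apply scal_addr. Qed.
Lemma sM {X : CBanachAlgebra} a b (x : X) : scal a (scal b x) = scal (Cmul a b) x.
Proof. symmetry; apply scal_mul. Qed.
Lemma s1 {X : CBanachAlgebra} (x : X) : scal Defs.C1 x = x.
Proof. apply scal_1. Qed.
Lemma msl {X : CBanachAlgebra} a (x y : X) : mul (scal a x) y = scal a (mul x y).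
Proof. apply scal_mull. Qed.
Lemma msr {X : CBanachAlgebra} a (x y : X) : mul x (scal a y) = scal a (mul x y).
Proof. apply scal_mulr. Qed.
Lemma s0 {X : CBanachAlgebra} a : scal a (@zero X) = zero.
Proof. apply (a_cancel (scal a zero)). rewrite <- sDr, a0l. reflexivity. Qed.
Lemma sC0 {X : CBanachAlgebra} (x : X) : scal Defs.C0 x = zero.
Proof.
  apply (a_cancel (scal Defs.C0 x)). rewrite <- sD. f_equal. unfold Cadd, Defs.C0; simpl; f_equal; ring.
Qed.
Lemma sNeg {X : CBanachAlgebra} (x : X) : scal (-1, 0) x = opp x.
Proof.
  apply opp_uniq. rewrite <- (s1 x) at 1. rewrite <- sD.
  replace (Cadd Defs.C1 (-1, 0)) with Defs.C0 by (unfold Cadd, Defs.C1, Defs.C0; simpl; f_equal; ring).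
  apply sC0.
Qed.

Lemma Cmod_nonneg c : 0 <= Cmod c.
Proof. apply sqrt_pos. Qed.
Lemma Cmod_C0 : Cmod Defs.C0 = 0.
Proof. unfold Cmod, Defs.C0; simpl. replace (0*0+0*0) with 0 by ring. apply sqrt_0. Qed.
Lemma Cmod_C1 : Cmod Defs.C1 = 1.
Proof. unfold Cmod, Defs.C1; simpl. replace (1*1+0*0) with 1 by ring. apply sqrt_1. Qed.
Lemma Cmod_mul a b : Cmod (Cmul a b) = Cmod a * Cmod b.
Proof.
  destruct a as [x y], b as [u v]; unfold Cmod, Cmul; simpl.
  rewrite <- sqrt_mult by nra. f_equal. ring.
Qed.
Lemma Cmod_triangle a b : Cmod (Cadd a b) <= Cmod a + Cmod b.
Proof.
  destruct a as [x y], b as [u v]; unfold Cmod, Cadd; simpl.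
  set (s1 := sqrt (x*x+y*y)). set (s2 := sqrt (u*u+v*v)).
  assert (h1 : s1 * s1 = x*x+y*y) by (apply sqrt_sqrt; nra).
  assert (h2 : s2 * s2 = u*u+v*v) by (apply sqrt_sqrt; nra).
  assert (p1 : 0 <= s1) by apply sqrt_pos. assert (p2 : 0 <= s2) by apply sqrt_pos.
  clearbody s1 s2.
  assert (cs : x*u + y*v <= s1 * s2).
  { assert (e : (s1*s2)*(s1*s2) - (x*u+y*v)*(x*u+y*v) = (x*v-y*u)*(x*v-y*u)).
    { replace ((s1*s2)*(s1*s2)) with ((s1*s1)*(s2*s2)) by ring. rewrite h1, h2. ring. }
    assert (0 <= s1 * s2) by nra.
    generalize dependent (s1*s2). generalize (x*u+y*v). intros Q P e HP.
    assert (Q*Q <= P*P) by (pose proof (Rle_0_sqr (x*v-y*u)) as Hs; unfold Rsqr in Hs; lra).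
    destruct (Rle_dec Q P) as [ok|ko]; [exact ok|].
    apply Rnot_le_lt in ko. assert (P*P < Q*Q) by (apply Rmult_le_0_lt_compat; lra). lra. }
  apply Rle_trans with (sqrt ((s1+s2)*(s1+s2))).
  - apply sqrt_le_1_alt. nra.
  - rewrite sqrt_square; lra.
Qed.
Lemma Cmod_pos c : c <> Defs.C0 -> 0 < Cmod c.
Proof.
  intro H. destruct c as [x y]. unfold Cmod; simpl. apply sqrt_lt_R0.
  destruct (Req_dec x 0); destruct (Req_dec y 0); subst; try nra.
  exfalso; apply H; reflexivity.
Qed.

Lemma norm_zero {X : CBanachAlgebra} : norm (@zero X) = 0.
Proof. rewrite <- (sC0 (@zero X)). rewrite norm_scal, Cmod_C0. ring. Qed.
Lemma norm_opp {X : CBanachAlgebra} (x : X) : norm (opp x) = norm x.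
Proof.
  rewrite <- sNeg, norm_scal. unfold Cmod; simpl.
  replace (-1 * -1 + 0 * 0) with 1 by ring. rewrite sqrt_1. ring.
Qed.
Lemma norm_nonneg {X : CBanachAlgebra} (x : X) : 0 <= norm x.
Proof.
  pose proof (norm_triangle X x (opp x)). rewrite aNr, norm_zero, norm_opp in H. lra.
Qed.

Definition wsd (u : nat -> R) : Prop :=
  forall e, e > 0 -> exists K N, 0 <= K /\ forall n, (n >= N)%nat -> u n <= K * e ^ n.

Lemma wsd_add u v : wsd u -> wsd v -> wsd (fun n => u n + v n).
Proof.
  intros Hu Hv e He. destruct (Hu e He) as [K1 [N1 [HK1 H1]]].
  destruct (Hv e He) as [K2 [N2 [HK2 H2]]].
  exists (K1 + K2), (N1 + N2)%nat. split; [lra|]. intros n Hn.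
  specialize (H1 n ltac:(lia)). specialize (H2 n ltac:(lia)). lra.
Qed.

Lemma wsd_le u w : wsd u -> (forall n, (n >= 1)%nat -> w n <= u n) -> wsd w.
Proof.
  intros Hu Hw e He. destruct (Hu e He) as [K [N [HK H]]].
  exists K, (N + 1)%nat. split; [lra|]. intros n Hn.
  specialize (H n ltac:(lia)). specialize (Hw n ltac:(lia)). lra.
Qed.

Lemma wsd_shift u k : wsd u -> wsd (fun n => u (n - k)%nat).
Proof.
  intros Hu e He. destruct (Hu e He) as [K [N [HK H]]].
  assert (Hek : 0 < e ^ k) by (apply pow_lt; lra).
  exists (K / e ^ k), (N + k)%nat. split.
  { apply Rmult_le_pos; [lra | left; apply Rinv_0_lt_compat; lra]. }
  intros n Hn. specialize (H (n - k)%nat ltac:(lia)).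
  replace (e ^ n) with (e ^ (n - k) * e ^ k).
  2:{ rewrite <- pow_add. f_equal. lia. }
  replace (K / e ^ k * (e ^ (n - k) * e ^ k)) with (K * e ^ (n - k)) by (field; lra).
  exact H.
Qed.

Lemma wsd_scale u c L : wsd u -> 0 <= c -> 0 <= L -> wsd (fun n => c * L ^ n * u n).
Proof.
  intros Hu Hc HL e He.
  assert (He' : e / (L + 1) > 0) by (apply Rdiv_lt_0_compat; lra).
  destruct (Hu _ He') as [K [N [HK H]]].
  exists (c * K), N. split; [nra|]. intros n Hn. specialize (H n Hn).
  assert (HLn : 0 <= L ^ n) by (apply pow_le; lra).
  assert (HL1 : L ^ n <= (L + 1) ^ n) by (apply pow_incr; lra).
  assert (Hp : 0 <= (e / (L+1)) ^ n) by (apply pow_le; lra).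
  assert (E : (L + 1) ^ n * (e / (L + 1)) ^ n = e ^ n).
  { rewrite <- Rpow_mult_distr. f_equal. field. lra. }
  apply Rle_trans with (c * L ^ n * (K * (e / (L + 1)) ^ n)).
  { apply Rmult_le_compat_l; [nra | exact H]. }
  rewrite <- E.
  assert (0 <= c * K) by nra.
  assert (L ^ n * (e / (L + 1)) ^ n <= (L + 1) ^ n * (e / (L + 1)) ^ n)
    by (apply Rmult_le_compat_r; lra).
  replace (c * L ^ n * (K * (e / (L + 1)) ^ n)) with ((c * K) * (L ^ n * (e / (L + 1)) ^ n)) by ring.
  replace (c * K * ((L + 1) ^ n * (e / (L + 1)) ^ n)) with ((c * K) * ((L + 1) ^ n * (e / (L + 1)) ^ n)) by ring.
  apply Rmult_le_compat_l; lra.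
Qed.

Lemma half_small y : 0 < y -> exists N, forall n, (n >= N)%nat -> (1/2) ^ n < y.
Proof.
  intro Hy. destruct (pow_lt_1_zero (1/2) ltac:(rewrite Rabs_right; lra) y Hy) as [N HN].
  exists N. intros n Hn. specialize (HN n Hn).
  rewrite Rabs_right in HN; [exact HN|]. apply Rle_ge, pow_le; lra.
Qed.

Lemma sd_of_wsd u : wsd u -> forall e, e > 0 -> exists N, forall n, (n >= N)%nat -> u n <= e ^ n.
Proof.
  intros Hu e He. destruct (Hu (e/2) ltac:(lra)) as [K [N [HK H]]].
  destruct (half_small (1 / (K + 1)) ltac:(apply Rdiv_lt_0_compat; lra)) as [M HM].
  exists (N + M)%nat. intros n Hn. specialize (H n ltac:(lia)). specialize (HM n ltac:(lia)).
  assert (E : (e / 2) ^ n = e ^ n * (1/2) ^ n).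
  { rewrite <- Rpow_mult_distr. f_equal. field. }
  rewrite E in H.
  assert (Hen : 0 < e ^ n) by (apply pow_lt; lra).
  assert (Hh : 0 <= (1/2) ^ n) by (apply pow_le; lra).
  assert (K * (1/2)^n <= 1).
  { assert (K * (1/2)^n * (K+1) <= K * (1 / (K+1)) * (K+1)).
    { apply Rmult_le_compat_r; [lra|]. apply Rmult_le_compat_l; lra. }
    replace (K * (1 / (K+1)) * (K+1)) with K in H0 by (field; lra). nra. }
  nra.
Qed.

Fixpoint Cpow (c : Cx) (n : nat) : Cx :=
  match n with O => Defs.C1 | S k => Cmul c (Cpow c k) end.
Lemma Cmod_pow c n : Cmod (Cpow c n) = Cmod c ^ n.
Proof. induction n; simpl; [apply Cmod_C1 | rewrite Cmod_mul, IHn; ring]. Qed.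
Lemma Cmul_comm a b : Cmul a b = Cmul b a.
Proof. destruct a, b; unfold Cmul; simpl; f_equal; ring. Qed.

Lemma apow_S {X : CBanachAlgebra} (x : X) n : apow X x (S n) = mul x (apow X x n).
Proof. reflexivity. Qed.
Lemma apow_0 {X : CBanachAlgebra} (x : X) : apow X x 0 = one.
Proof. reflexivity. Qed.
Lemma pow_comm {X : CBanachAlgebra} (x : X) n : mul (apow X x n) x = mul x (apow X x n).
Proof.
  induction n.
  - rewrite apow_0, m1l, m1r. reflexivity.
  - rewrite apow_S, <- mA, IHn. reflexivity.
Qed.
Lemma norm_pow_le {X : CBanachAlgebra} (x : X) n : norm (apow X x (S n)) <= norm x ^ (S n).
Proof.
  induction n.
  - rewrite apow_S, apow_0, m1r. simpl. lra.
  - rewrite apow_S. apply Rle_trans with (norm x * norm (apow X x (S n))); [apply norm_mul|].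
    simpl pow at 1. apply Rmult_le_compat_l; [apply norm_nonneg | exact IHn].
Qed.

Lemma key {X : CBanachAlgebra} (lam : Cx) (A Ad B D Dd : X) :
  lam <> Defs.C0 -> is_gdrazin X A Ad ->
  mul Dd D = mul D Dd -> Dd = mul (mul Dd D) Dd ->
  mul A B = scal lam (mul (mul (spidem X A Ad) B) D) ->
  mul Ad B = zero /\ mul B Dd = zero /\
  mul (add A (opp (mul (mul A A) Ad))) B = scal lam (mul B (add D (opp (mul (mul D D) Dd)))).
Proof.
  intros Hlam [hcA [hiA hqA]] hcD hiD HAB.
  unfold spidem, sub in HAB.
  assert (hiAs : mul (mul Ad A) Ad = Ad) by (symmetry; exact hiA).
  assert (hiDs : mul (mul Dd D) Dd = Dd) by (symmetry; exact hiD).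
  assert (H1 : mul Ad (mul A B) = zero).
  { rewrite HAB, msr, !mA, mDr, m1r, mNr, mA, hiAs, aNr, !m0l, s0. reflexivity. }
  assert (hAdB : mul Ad B = zero).
  { rewrite hiA at 1. rewrite <- (mA Ad A Ad), <- hcA, <- !mA, H1, m0r. reflexivity. }
  assert (hpiB : mul (add one (opp (mul A Ad))) B = B).
  { rewrite mDl, m1l, mNl, <- mA, hAdB, m0r, opp0, a0r. reflexivity. }
  rewrite hpiB in HAB.
  set (a := add A (opp (mul (mul A A) Ad))).
  assert (haB : mul a B = scal lam (mul B D)).
  { unfold a. rewrite mDl, mNl, <- (mA _ Ad B), hAdB, m0r, opp0, a0r. exact HAB. }
  assert (hpow : forall k, mul (apow X a k) B = scal (Cpow lam k) (mul B (apow X D k))).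
  { induction k.
    - rewrite !apow_0, m1l, m1r. simpl. rewrite s1. reflexivity.
    - rewrite !apow_S, <- mA, IHk, msr, mA, haB, msl, sM, <- mA, Cmul_comm. reflexivity. }
  assert (hQ : forall k, apow X Dd (S k) = mul D (apow X Dd (S (S k)))).
  { intro k. rewrite apow_S. rewrite hiD at 1. rewrite hcD, <- !mA. reflexivity. }
  assert (hP : forall k, mul B Dd = mul (mul B (apow X D k)) (apow X Dd (S k))).
  { induction k.
    - rewrite apow_0, apow_S, apow_0, !m1r. reflexivity.
    - rewrite IHk, hQ, (mA _ D), <- (mA B _ D), pow_comm. reflexivity. }
  assert (hBDd : mul B Dd = zero).
  { apply norm_eq0.
    set (v := norm (mul B Dd)).
    assert (Hv : 0 <= v) by apply norm_nonneg.
    set (r := Cmod lam). assert (Hr : 0 < r) by (apply Cmod_pos; exact Hlam).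
    set (nB := norm B). set (nDd := norm Dd).
    assert (HnB : 0 <= nB) by apply norm_nonneg. assert (HnDd : 0 <= nDd) by apply norm_nonneg.
    set (dl := r / (2 * (nDd + 1))).
    assert (Hdl : dl > 0) by (unfold dl; apply Rdiv_lt_0_compat; lra).
    destruct (hqA dl Hdl) as [N HN].
    assert (Hbound : forall k, (k >= N)%nat -> v <= (1/2) ^ k * (nB * nDd)).
    { intros k Hk. specialize (HN k Hk). fold a in HN.
      change (gpow one mul a k) with (apow X a k) in HN.
      assert (h1 : v <= norm (mul B (apow X D k)) * nDd ^ (S k)).
      { unfold v. rewrite (hP k).
        apply Rle_trans with (norm (mul B (apow X D k)) * norm (apow X Dd (S k))); [apply norm_mul|].
        apply Rmult_le_compat_l; [apply norm_nonneg | apply norm_pow_le]. }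
      assert (h2 : r ^ k * norm (mul B (apow X D k)) <= dl ^ k * nB).
      { unfold r. rewrite <- Cmod_pow, <- norm_scal, <- hpow.
        apply Rle_trans with (norm (apow X a k) * nB); [apply norm_mul|].
        apply Rmult_le_compat_r; [exact HnB | exact HN]. }
      assert (Hrk : 0 < r ^ k) by (apply pow_lt; lra).
      assert (Hb : 0 <= norm (mul B (apow X D k))) by apply norm_nonneg.
      assert (HDk : 0 <= nDd ^ k) by (apply pow_le; lra).
      assert (h3 : r ^ k * v <= dl ^ k * nB * nDd ^ (S k)).
      { apply Rle_trans with (r ^ k * (norm (mul B (apow X D k)) * nDd ^ (S k))).
        - apply Rmult_le_compat_l; lra.
        - rewrite <- Rmult_assoc. apply Rmult_le_compat_r; [simpl; nra | exact h2]. }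
      assert (h4 : dl ^ k * nDd ^ k <= r ^ k * (1/2) ^ k).
      { rewrite <- !Rpow_mult_distr. apply pow_incr. split.
        - apply Rmult_le_pos; lra.
        - unfold dl. apply Rle_trans with (r * (1/2) * (nDd / (nDd + 1))).
          + right. field. lra.
          + assert (nDd / (nDd + 1) <= 1).
            { apply Rmult_le_reg_r with (nDd + 1); [lra|]. field_simplify; lra. }
            nra. }
      assert (h5 : r ^ k * v <= r ^ k * ((1/2) ^ k * (nB * nDd))).
      { apply Rle_trans with (dl ^ k * nB * nDd ^ (S k)); [exact h3|].
        replace (dl ^ k * nB * nDd ^ (S k)) with ((dl ^ k * nDd ^ k) * (nB * nDd)) by (simpl; ring).
        replace (r ^ k * ((1 / 2) ^ k * (nB * nDd))) with ((r ^ k * (1/2) ^ k) * (nB * nDd)) by ring.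
        apply Rmult_le_compat_r; [nra | exact h4]. }
      apply Rmult_le_reg_l with (r ^ k); lra. }
    destruct (Rle_lt_or_eq_dec 0 v Hv) as [Hpos|Hz]; [|symmetry; exact Hz].
    exfalso.
    destruct (half_small (v / (nB * nDd + 1))) as [M HM].
    { apply Rdiv_lt_0_compat; nra. }
    specialize (HM (N + M)%nat ltac:(lia)). specialize (Hbound (N + M)%nat ltac:(lia)).
    assert (Hh : 0 <= (1/2) ^ (N + M)) by (apply pow_le; lra).
    assert ((1/2) ^ (N + M) * (nB * nDd + 1) < v).
    { apply Rmult_lt_reg_r with (/ (nB * nDd + 1)).
      - apply Rinv_0_lt_compat; nra.
      - replace ((1 / 2) ^ (N + M) * (nB * nDd + 1) * / (nB * nDd + 1)) with ((1/2) ^ (N + M)) by (field; nra).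
        exact HM. }
    nra. }
  split; [exact hAdB|]. split; [exact hBDd|].
  rewrite haB. f_equal.
  rewrite mDr, mNr, (mA B (mul D D) Dd), (mA B D D).
  assert (E : mul (mul (mul B D) D) Dd = zero).
  { rewrite <- (mA _ D Dd), <- hcD, (mA _ Dd D), <- (mA B D Dd), <- hcD, (mA B Dd D), hBDd, !m0l.
    reflexivity. }
  rewrite E, opp0, a0r. reflexivity.
Qed.

Lemma Npow {X : CBanachAlgebra} (lam : Cx) (a B C d : X) (L : R) :
  mul a B = scal lam (mul B d) -> mul d C = scal lam (mul C a) -> mul B C = zero ->
  L = (Cmod lam + 1) * (Cmod lam + 1) ->
  forall n, exists p q, Cmod p <= L ^ n /\ Cmod q <= L ^ n /\ (n = 0%nat -> q = Defs.C0) /\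
    M2pow X (mk2 a B C d) (S n) =
    mk2 (apow X a (S n)) (scal p (mul B (apow X d n))) (scal p (mul C (apow X a n)))
        (add (apow X d (S n)) (scal q (mul C (mul B (apow X d (pred n)))))).
Proof.
  intros HaB HdC HBC HL.
  set (r := Cmod lam). assert (Hr : 0 <= r) by apply Cmod_nonneg. fold r in HL.
  assert (HL1 : 1 <= L) by nra.
  induction n as [|n IH].
  - exists Defs.C1, Defs.C0. rewrite Cmod_C1, Cmod_C0. simpl. split; [lra|]. split; [lra|].
    split; [reflexivity|].
    unfold M2pow; simpl. unfold M2mul; simpl.
    rewrite !m0r, !a0r, !a0l, !s1, sC0, !m1r, a0r. reflexivity.
  - destruct IH as [p [q [Hp [Hq [Hq0 E]]]]].
    exists (Cadd (Cmul p lam) Defs.C1), (Cadd p (Cmul q (Cmul lam lam))).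
    assert (HLn : 1 <= L ^ n) by (apply pow_R1_Rle; lra).
    assert (Hpn : 0 <= Cmod p) by apply Cmod_nonneg.
    assert (Hqn : 0 <= Cmod q) by apply Cmod_nonneg.
    split; [|split; [|split]].
    + apply Rle_trans with (Cmod (Cmul p lam) + Cmod Defs.C1); [apply Cmod_triangle|].
      rewrite Cmod_mul, Cmod_C1. fold r. simpl. nra.
    + apply Rle_trans with (Cmod p + Cmod (Cmul q (Cmul lam lam))); [apply Cmod_triangle|].
      rewrite !Cmod_mul. fold r. simpl. nra.
    + discriminate.
    + change (M2pow X (mk2 a B C d) (S (S n))) with (M2mul X (mk2 a B C d) (M2pow X (mk2 a B C d) (S n))).
      rewrite E. unfold M2mul. cbn [m11 m12 m21 m22]. f_equal.
      * rewrite msr, mA, HBC, m0l, s0, a0r. reflexivity.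
      * rewrite msr, mA, HaB, msl, sM, mDr, msr, (mA B C), HBC, m0l, s0, a0r, sD, s1.
        rewrite (apow_S d n), <- (mA B d). reflexivity.
      * rewrite msr, mA, HdC, msl, sM, sD, s1, aC.
        rewrite (apow_S a n), <- (mA C a). reflexivity.
      * rewrite msr, mDr, msr, <- (apow_S d (S n)).
        destruct n as [|m].
        -- rewrite (Hq0 eq_refl), sC0, a0r.
           replace (Cadd p (Cmul Defs.C0 (Cmul lam lam))) with p
             by (destruct p; unfold Cadd, Cmul, Defs.C0; simpl; f_equal; ring).
           apply aC.
        -- assert (EZ : mul d (mul C (mul B (apow X d (pred (S m))))) =
                        scal (Cmul lam lam) (mul C (mul B (apow X d (S m))))).
           { simpl pred. rewrite mA, HdC, msl, <- mA, (mA a B), HaB, msl, msr, sM.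
             rewrite (apow_S d m), <- (mA B d). reflexivity. }
           rewrite EZ, sM, sD, aA, (aC (scal p _) (apow X d (S (S (S m))))), <- aA.
           reflexivity.
Qed.

Lemma norm_sc {X : CBanachAlgebra} p (u v : X) K :
  Cmod p <= K -> norm (scal p (mul u v)) <= K * (norm u * norm v).
Proof.
  intro H. rewrite norm_scal.
  pose proof (norm_mul X u v). pose proof (norm_nonneg (mul u v)).
  pose proof (Cmod_nonneg p). pose proof (norm_nonneg u). pose proof (norm_nonneg v).
  nra.
Qed.

Lemma norm_m2 {X : CBanachAlgebra} (u v w : X) : norm (mul u (mul v w)) <= norm u * (norm v * norm w).
Proof.
  apply Rle_trans with (norm u * norm (mul v w)); [apply norm_mul|].
  apply Rmult_le_compat_l; [apply norm_nonneg | apply norm_mul].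
Qed.

Lemma wsd_qn {X : CBanachAlgebra} (a : X) :
  gquasinil one mul norm a -> wsd (fun n => norm (apow X a n)).
Proof.
  intros H e He. destruct (H e He) as [N HN]. exists 1, N. split; [lra|].
  intros n Hn. specialize (HN n Hn). unfold apow. lra.
Qed.

Lemma N_quasinil {X : CBanachAlgebra} (lam : Cx) (a B C d : X) :
  gquasinil one mul norm a -> gquasinil one mul norm d ->
  mul a B = scal lam (mul B d) -> mul d C = scal lam (mul C a) -> mul B C = zero ->
  gquasinil (M2one X) (M2mul X) (M2norm X) (mk2 a B C d).
Proof.
  intros Qa Qd HaB HdC HBC.
  set (L := (Cmod lam + 1) * (Cmod lam + 1)).
  assert (HL1 : 1 <= L) by (unfold L; pose proof (Cmod_nonneg lam); nra).
  pose proof (Npow lam a B C d L HaB HdC HBC eq_refl) as HP.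
  set (na := fun n => norm (apow X a n)). set (nd := fun n => norm (apow X d n)).
  set (nB := norm B). set (nC := norm C).
  assert (HnB : 0 <= nB) by apply norm_nonneg. assert (HnC : 0 <= nC) by apply norm_nonneg.
  assert (Wa : wsd na) by (apply wsd_qn; exact Qa).
  assert (Wd : wsd nd) by (apply wsd_qn; exact Qd).
  set (u := fun m => na m + nB * L ^ m * nd (m - 1)%nat + nC * L ^ m * na (m - 1)%nat + nd m
                     + (nC * nB) * L ^ m * nd (m - 2)%nat).
  assert (Wu : wsd u).
  { unfold u. apply wsd_add; [apply wsd_add; [apply wsd_add; [apply wsd_add|]|]|].
    - exact Wa.
    - apply (wsd_scale (fun m => nd (m - 1)%nat)); [apply wsd_shift; exact Wd | exact HnB | lra].
    - apply (wsd_scale (fun m => na (m - 1)%nat)); [apply wsd_shift; exact Wa | exact HnC | lra].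
    - exact Wd.
    - apply (wsd_scale (fun m => nd (m - 2)%nat)); [apply wsd_shift; exact Wd | nra | lra]. }
  assert (Wn : wsd (fun m => M2norm X (M2pow X (mk2 a B C d) m))).
  { apply (wsd_le u); [exact Wu|]. intros m Hm. destruct m as [|n]; [lia|].
    destruct (HP n) as [p [q [Hp [Hq [_ E]]]]]. rewrite E. unfold M2norm; cbn [m11 m12 m21 m22].
    unfold u. replace (S n - 1)%nat with n by lia. replace (S n - 2)%nat with (pred n) by lia.
    assert (HLS : L ^ n <= L ^ S n) by (simpl; pose proof (pow_R1_Rle L n HL1); nra).
    assert (h1 : norm (scal p (mul B (apow X d n))) <= nB * L ^ S n * nd n).
    { pose proof (norm_sc p B (apow X d n) _ Hp) as Hs. unfold nd; fold nB in Hs.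
      pose proof (norm_nonneg (apow X d n)).
      apply Rle_trans with (L ^ n * (nB * norm (apow X d n))); [exact Hs|].
      replace (nB * L ^ S n * norm (apow X d n)) with (L ^ S n * (nB * norm (apow X d n))) by ring.
      apply Rmult_le_compat_r; [apply Rmult_le_pos; auto | exact HLS]. }
    assert (h2 : norm (scal p (mul C (apow X a n))) <= nC * L ^ S n * na n).
    { pose proof (norm_sc p C (apow X a n) _ Hp) as Hs. unfold na; fold nC in Hs.
      pose proof (norm_nonneg (apow X a n)).
      apply Rle_trans with (L ^ n * (nC * norm (apow X a n))); [exact Hs|].
      replace (nC * L ^ S n * norm (apow X a n)) with (L ^ S n * (nC * norm (apow X a n))) by ring.
      apply Rmult_le_compat_r; [apply Rmult_le_pos; auto | exact HLS]. }
    assert (h3 : norm (add (apow X d (S n)) (scal q (mul C (mul B (apow X d (pred n))))))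
                 <= nd (S n) + nC * nB * L ^ S n * nd (pred n)).
    { eapply Rle_trans; [apply norm_triangle|]. unfold nd. apply Rplus_le_compat_l.
      rewrite norm_scal. pose proof (norm_m2 C B (apow X d (pred n))). fold nB nC in H.
      pose proof (norm_nonneg (apow X d (pred n))). pose proof (Cmod_nonneg q).
      pose proof (norm_nonneg (mul C (mul B (apow X d (pred n))))).
      assert (Cmod q * norm (mul C (mul B (apow X d (pred n)))) <= L ^ n * (nC * (nB * norm (apow X d (pred n))))).
      { apply Rmult_le_compat; auto. }
      assert (0 <= nC * (nB * norm (apow X d (pred n)))) by (apply Rmult_le_pos; [|apply Rmult_le_pos]; auto).
      nra. }
    assert (na (S n) = norm (apow X a (S n))) by reflexivity. lra. }
  intros e He. apply (sd_of_wsd _ Wn e He).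
Qed.

Lemma gpsum_zero {X : CBanachAlgebra} (f : nat -> M2 X) n :
  (forall k, f k = M2zero X) -> gpsum (M2add X) f n = M2zero X.
Proof.
  intro Hf. induction n; simpl; rewrite ?IHn, Hf; [reflexivity|].
  unfold M2add, M2zero; cbn. rewrite !a0r. reflexivity.
Qed.

Theorem theorem4p3 (Alg : CBanachAlgebra) (lam : Cx) (A B C D Ad Dd : Alg) :
  lam <> C0 ->
  is_gdrazin Alg A Ad -> is_gdrazin Alg D Dd ->
  mul A B = scal lam (mul (mul (spidem Alg A Ad) B) D) ->
  mul D C = scal lam (mul (mul (spidem Alg D Dd) C) A) ->
  mul B C = zero ->
  exists S : M2 Alg,
    M2series_sum Alg
      (fun n => M2mul Alg (M2pow Alg (mk2 A B C D) n)
                  (mk2 zero (mul B (apow Alg Dd (n + 2)))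
                       (mul C (apow Alg Ad (n + 2))) zero)) S /\
    M2is_gdrazin Alg (mk2 A B C D) (M2add Alg (mk2 Ad zero zero Dd) S).
Proof.
  intros Hlam HA HD HAB HDC HBC.
  pose proof HA as [hcA [hiA hqA]]. pose proof HD as [hcD [hiD hqD]].
  destruct (key lam A Ad B D Dd Hlam HA hcD hiD HAB) as [hAdB [hBDd haB]].
  destruct (key lam D Dd C A Ad Hlam HD hcA hiA HDC) as [hDdC [hCAd hdC]].
  exists (M2zero Alg). split.
  - intros eps He. exists 0%nat. intros n _.
    rewrite gpsum_zero.
    + unfold M2add, M2opp, M2zero, M2norm; cbn. rewrite opp0, a0r, norm_zero. lra.
    + intro k. rewrite Nat.add_comm. simpl (2 + k)%nat.
      rewrite (apow_S Dd (S k)), (apow_S Ad (S k)), (mA B Dd), (mA C Ad), hBDd, hCAd, !m0l.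
      unfold M2mul, M2zero; cbn. rewrite !m0r, !a0r. reflexivity.
  - replace (M2add Alg (mk2 Ad zero zero Dd) (M2zero Alg)) with (mk2 Ad zero zero Dd)
      by (unfold M2add, M2zero; cbn; rewrite !a0r; reflexivity).
    unfold M2is_gdrazin, gis_gdrazin. split; [|split].
    + unfold M2mul; cbn [m11 m12 m21 m22].
      rewrite ?m0l, ?m0r, ?a0l, ?a0r, hAdB, hBDd, hDdC, hCAd, hcA, hcD. reflexivity.
    + unfold M2mul; cbn [m11 m12 m21 m22].
      rewrite ?m0l, ?m0r, ?a0l, ?a0r, hAdB, hDdC, ?m0l, ?m0r, ?a0l, ?a0r.
      rewrite <- hiA, <- hiD. reflexivity.
    + assert (E12 : mul (add (mul A B) (mul B D)) Dd = zero).
      { rewrite mDl, <- (mA A B Dd), hBDd, m0r, a0l, <- (mA B D Dd), <- hcD, (mA B Dd D), hBDd, m0l.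
        reflexivity. }
      assert (E21 : mul (add (mul C A) (mul D C)) Ad = zero).
      { rewrite mDl, <- (mA D C Ad), hCAd, m0r, a0r, <- (mA C A Ad), <- hcA, (mA C Ad A), hCAd, m0l.
        reflexivity. }
      assert (E22 : mul (add (mul C B) (mul D D)) Dd = mul (mul D D) Dd).
      { rewrite mDl, <- (mA C B Dd), hBDd, m0r, a0l. reflexivity. }
      assert (EM : M2add Alg (mk2 A B C D)
                     (M2opp Alg (M2mul Alg (M2mul Alg (mk2 A B C D) (mk2 A B C D)) (mk2 Ad zero zero Dd)))
                   = mk2 (add A (opp (mul (mul A A) Ad))) B C (add D (opp (mul (mul D D) Dd)))).
      { unfold M2add, M2opp, M2mul; cbn [m11 m12 m21 m22].
        rewrite HBC, !m0r, E12, E21, E22, !a0r, !a0l, !opp0, !a0r. reflexivity. }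
      rewrite EM. apply (N_quasinil lam); assumption.
Qed.
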